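(* Let $K_2$ denote the metric space with two points at distance $1$. For a path $(X_t)_{0<t\ll 1}$ of finite metric spaces, let $f^X$ denote the (partially defined) function on $(0,\infty)$ given by $f^X(s)=\lim_{t\to 0}|sX_t|$. Then: (1) For every $\ell\in(1,\infty)$ there exists a path $(X_t)_{0<t\ll1}$ in $\operatorname{FMet}$ such that $X_t\to K_2$ in the Gromov--Hausdorff topology as $t\to0$, but $\lim_{s\to 0}f^X(s)=\ell$. (2) For every $L\in(2,\infty)$ there exists a path $(X_t)_{0<t\ll1}$ in $\operatorname{FMet}$ such that $X_t\to K_2$ as $t\to 0$, but $\lim_{s\to\infty}f^X(s)=L$. (3) For every $S\in(0,\infty)$ there exists a path $(X_t)_{0<t\ll1}$ in $\operatorname{FMet}$ such that $X_t\to K_2$ as $t\to0$, but the function $f^X$ has a singularity at $S$ (i.e. $f^X(s)$ is unbounded as $s\to S$).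
   Context: For a finite metric space $(X,d)$, its similarity matrix $Z_X$ is the $X\times X$ matrix with entries $e^{-d(x,y)}$. A weighting is a vector $\mathbf{w}\in\mathbb{R}^X$ with $Z_X\mathbf{w}=(1,\dots,1)^\top$; if one exists, the magnitude $|X|$ is the sum of its entries (independent of the choice). For $s>0$, $sX$ denotes the metric space $(X, s\,d)$. $\operatorname{FMet}$ is the set of isometry classes of finite metric spaces with the Gromov--Hausdorff metric. A path $(X_t)_{0<t\ll1}$ is a family of finite metric spaces indexed by $t$ in some interval $(0,\varepsilon)$. *)

(* Defs.v *)
From HB Require Import structures.
From mathcomp Require Import all_boot all_order all_algebra.
From mathcomp Require Import all_classical all_reals.
From mathcomp.analysis Require Import sequences exp.
Set Implicit Arguments. Unset Strict Implicit. Unset Printing Implicit Defensive.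
Import Order.TTheory GRing.Theory Num.Theory.
Local Open Scope ring_scope.

(* A finite metric space, with point set 'I_card (isometry classes are
   represented by any labelling of the points). *)
Record finMetric (R : realType) := FinMetric {
  card : nat;
  dist : 'I_card -> 'I_card -> R;
  dist_self : forall x, dist x x = 0;
  dist_sym : forall x y, dist x y = dist y x;
  dist_pos : forall x y, x != y -> 0 < dist x y;
  dist_tri : forall x y z, dist x z <= dist x y + dist y z }.
Arguments card {R} f.
Arguments dist {R} f _ _.

Definition K2_dist (R : realType) (i j : 'I_2) : R := if i == j then 0 else 1.

Lemma K2_self (R : realType) x : K2_dist R x x = 0.
Proof. by rewrite /K2_dist eqxx. Qed.

Lemma K2_sym (R : realType) x y : K2_dist R x y = K2_dist R y x.
Proof. by rewrite /K2_dist eq_sym. Qed.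

Lemma K2_pos (R : realType) x y : x != y -> 0 < K2_dist R x y.
Proof. by rewrite /K2_dist => /negbTE ->; rewrite ltr01. Qed.

Lemma K2_tri (R : realType) x y z :
  K2_dist R x z <= K2_dist R x y + K2_dist R y z.
Proof.
rewrite /K2_dist; case: (x =P z) => [->|Hxz]; first by
  case: (z == y); case: (y == z); rewrite ?addr0 ?add0r ?ler01 ?addr_ge0 ?ler01.
case: (x =P y) => [Hxy|_]; case: (y =P z) => [Hyz|_] //=;
  rewrite ?add0r ?addr0 //.
- by case: Hxz; rewrite Hxy Hyz.
- by rewrite lerDl ler01.
Qed.

Definition K2 (R : realType) : finMetric R :=
  FinMetric (@K2_self R) (@K2_sym R) (@K2_pos R) (@K2_tri R).

(* [scaled_magnitude X s m] : the metric space sX (distances s * d) has a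
   weighting w (Z_{sX} w = (1,...,1)^T, Z_{sX} x y = e^{-s d(x,y)}) whose
   entries sum to m, i.e. |sX| is defined and equals m. *)
Definition scaled_magnitude (R : realType) (X : finMetric R) (s m : R) : Prop :=
  exists w : 'I_(card X) -> R,
    (forall x, \sum_(y < card X) expR (- (s * dist X x y)) * w y = 1)
    /\ \sum_(y < card X) w y = m.

(* A path (X_t)_{0<t<<1} is represented by X : R -> finMetric R; only the
   values for small positive t matter.
   [fX X s l] : f^X(s) is defined and equals l, i.e. |sX_t| is defined for all
   sufficiently small t > 0 and |sX_t| -> l as t -> 0+. *)
Definition fX (R : realType) (X : R -> finMetric R) (s l : R) : Prop :=
  (exists e : R, 0 < e /\ forall t, 0 < t < e -> exists m, scaled_magnitude (X t) s m)
  /\ (forall eps : R, 0 < eps -> exists del : R, 0 < del /\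
        forall t m, 0 < t < del -> scaled_magnitude (X t) s m -> `|m - l| < eps).

(* Correspondences and Gromov--Hausdorff distance for finite spaces:
   d_GH(X,Y) = 1/2 min_C dis(C); hence d_GH(X,Y) < r iff some correspondence
   has distortion < 2r. *)
Definition correspondence (R : realType) (X Y : finMetric R)
    (C : 'I_(card X) -> 'I_(card Y) -> bool) : Prop :=
  (forall x, exists y, C x y) /\ (forall y, exists x, C x y).

Definition GH_lt (R : realType) (X Y : finMetric R) (r : R) : Prop :=
  exists C, correspondence C /\
    forall x x' y y', C x y -> C x' y' ->
      `|dist X x x' - dist Y y y'| < 2 * r.

Definition GH_conv (R : realType) (X : R -> finMetric R) (Y : finMetric R) : Prop :=
  forall eps : R, 0 < eps -> exists del : R, 0 < del /\
    forall t, 0 < t < del -> GH_lt (X t) Y eps.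

Definition fX_lim0 (R : realType) (X : R -> finMetric R) (l : R) : Prop :=
  (exists del : R, 0 < del /\ forall s, 0 < s < del -> exists v, fX X s v)
  /\ (forall eps : R, 0 < eps -> exists del : R, 0 < del /\
        forall s v, 0 < s < del -> fX X s v -> `|v - l| < eps).

Definition fX_limoo (R : realType) (X : R -> finMetric R) (L : R) : Prop :=
  (exists M : R, forall s, M < s -> exists v, fX X s v)
  /\ (forall eps : R, 0 < eps -> exists M : R,
        forall s v, M < s -> fX X s v -> `|v - L| < eps).

Definition fX_singular (R : realType) (X : R -> finMetric R) (S : R) : Prop :=
  (exists del : R, 0 < del /\
     forall s, 0 < s -> 0 < `|s - S| < del -> exists v, fX X s v)
  /\ (forall (B del : R), 0 < del -> exists s v,
        [/\ 0 < s, 0 < `|s - S| < del, fX X s v & B < `|v|]).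

(* Main.v *)
Require Import Defs.
From mathcomp Require Import all_boot all_order all_algebra.
From mathcomp Require Import all_classical all_reals.
From mathcomp.analysis Require Import sequences exp.
From mathcomp Require Import topology normedtype derive realfun.
From mathcomp.algebra_tactics Require Import ring lra.
Import Order.TTheory GRing.Theory Num.Theory.
Import numFieldNormedType.Exports.
Local Open Scope ring_scope.

Local Open Scope classical_set_scope.
Section S.
Variable R : realType.
Lemma exp_lb3 (x : R) : 0 <= x -> 1 + x + x^+2/2 + x^+3/6 <= expR x.
Proof.
move=> x0; rewrite /expR.
have H : series (exp_coeff x) 4 <= limn (series (exp_coeff x)).
  apply: nondecreasing_cvgn_le; last exact: is_cvg_series_exp_coeff.
  by apply: nondecreasing_series => n _ _; rewrite /exp_coeff /= divr_ge0 // exprn_ge0.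
apply: le_trans H.
rewrite /series /= /exp_coeff /=.
rewrite !big_nat_recr //= big_nil /=.
rewrite !factS /= .
have -> : (1 + 1)%R = 2%N by [].
have -> : (1 + (1 + 1))%R = 3%N by [].
rewrite ?(_ : (1 + 1)%R.+1 = 3%N)//.
rewrite expr0 expr1 add0r !fact0 /=.
rewrite (_ : (1 * 1)%N = 1%N) // (_ : (1.+1 * 1)%N = 2%N) // (_ : (3 * 2)%N = 6%N) // !divr1.
exact: lexx.
Qed.

Lemma exp_ub2 (y : R) : y <= 0 -> expR y <= 1 + y + y^+2/2.
Proof.
move=> y0; set x := - y.
have x0 : 0 <= x by rewrite /x oppr_ge0.
have := @exp_lb3 x x0.
have -> : y = - x by rewrite /x opprK.
rewrite expRN => H.
have P0 : 0 < 1 + x + x^+2/2 + x^+3/6 by have := exprn_ge0 3 x0; have := exprn_ge0 2 x0; lra.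
have Q0 : 0 < 1 + - x + (- x)^+2/2.
  have -> : 1 + - x + (- x)^+2/2 = (x - 1)^+2/2 + 1/2 by field.
  have := sqr_ge0 (x - 1); lra.
have e0 := expR_gt0 x.
rewrite -[_^-1]mul1r ler_pdivrMr //.
have : (1 + - x + (- x)^+2/2) * (1 + x + x^+2/2 + x^+3/6) <= (1 + - x + (- x)^+2/2) * expR x.
  by rewrite ler_pM2l.
have : 1 <= (1 + - x + (- x)^+2/2) * (1 + x + x^+2/2 + x^+3/6).
  have -> : (1 + - x + (- x)^+2/2) * (1 + x + x^+2/2 + x^+3/6) = 1 + x^+3/6 + x^+4/12 + x^+5/12 by field.
  have := exprn_ge0 3 x0; have := exprn_ge0 4 x0; have := exprn_ge0 5 x0; lra.
lra.
Qed.

Lemma derive_aux (z : R) : is_derive z (1:R) (fun z => expR z - (1 + z + z^+2/2 + z^+3/6)) (expR z - (1 + z + z^+2/2)).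
Proof.
apply: is_derive_eq.
rewrite !scaler0 !add0r.
have E (w : R) : w%:A = w by rewrite /GRing.scale /= mulr1.
rewrite !E.
have F (u w : R) : u *: w = u * w by [].
by rewrite !F; field.
Qed.

Lemma exp_lb3n (y : R) : y <= 0 -> 1 + y + y^+2/2 + y^+3/6 <= expR y.
Proof.
move=> y0.
set f := fun z : R => expR z - (1 + z + z^+2/2 + z^+3/6).
suff : f 0 <= f y by rewrite /f expR0 expr0n /= expr0n /=; lra.
apply: (@ler0_derive1_nincr R f y 0) => //.
- move=> x; rewrite in_itv /= => /andP [_ x0].
  rewrite derive1E (@derive_val _ _ _ _ _ _ _ (derive_aux x)).
  have := @exp_ub2 x (ltW x0); lra.
- apply: continuous_subspaceT. move=> x.
  by apply: differentiable_continuous; apply/derivable1_diffP; apply: ex_derive; apply: derive_aux.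
Qed.

Lemma lim0P (f : R -> R) l : f @ 0^'+ --> l -> forall eps : R, 0 < eps ->
  exists del : R, 0 < del /\ forall r, 0 < r < del -> `|f r - l| < eps.
Proof.
move/cvgrPdist_lt => H eps e0.
have := H eps e0.
case/nbhs_ballP => del /= del0 Hd.
exists del; split => // r /andP [r0 rd].
rewrite distrC; apply: Hd => //.
by rewrite /ball /= sub0r normrN gtr0_norm.
Qed.
Lemma lim0Q (f : R -> R) l : (forall eps : R, 0 < eps ->
  exists del : R, 0 < del /\ forall r, 0 < r < del -> `|f r - l| < eps) -> f @ 0^'+ --> l.
Proof.
move=> H; apply/cvgrPdist_lt => eps e0.
have [del [d0 Hd]] := H eps e0.
apply/nbhs_ballP; exists del => //= r; rewrite /ball /= sub0r normrN => rd r0.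
rewrite distrC; apply: Hd; rewrite r0 /=.
by rewrite gtr0_norm in rd.
Qed.
Definition E (x r : R) := expR (- (r * x)).
Definition T (x r : R) := (E x r - 1 + r * x) / r ^+ 2.
Lemma ET x r : r != 0 -> E x r = 1 - r * x + r ^+ 2 * T x r.
Proof. move=> r0; rewrite /T; field. done. Qed.


Lemma T_bound x r : 0 <= x -> 0 < r -> `|T x r - x^+2/2| <= r * x^+3 / 6.
Proof.
move=> x0 r0; set y := - (r * x).
have y0 : y <= 0 by rewrite /y oppr_le0 mulr_ge0 // ltW.
have -> : T x r - x^+2/2 = (expR y - (1 + y + y^+2/2)) / r^+2.
  rewrite /T /E -/y /y; field; by rewrite gt_eqF.
have h1 := @exp_ub2 y y0.
have h2 := @exp_lb3n y y0.
have r2 : 0 < r^+2 by rewrite exprn_gt0.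
rewrite ler0_norm; last by rewrite pmulr_lle0 ?invr_gt0 //; lra.
rewrite -mulNr ler_pdivrMr //.
have -> : r * x ^+ 3 / 6 * r ^+ 2 = - y^+3/6 by rewrite /y; ring.
lra.
Qed.

Lemma T_lim x : 0 <= x -> T x @ 0^'+ --> x^+2/2.
Proof.
move=> x0; apply: lim0Q => eps e0.
have k0 : 0 < x^+3/6 + 1 by have := exprn_ge0 3 x0; lra.
exists (eps / (x^+3/6 + 1)); split; first by rewrite divr_gt0.
move=> r /andP [r0 rd].
apply: le_lt_trans (@T_bound x r x0 r0) _.
rewrite ltr_pdivlMr // in rd.
have := exprn_ge0 3 x0.
nra.
Qed.


Section cv.
Variable F : set_system R.
Context {FF : Filter F}.
Lemma cD (f g : R -> R) (x y : R) : f @ F --> x -> g @ F --> y -> (fun r => f r + g r) @ F --> x + y.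
Proof. exact: cvgD. Qed.
Lemma cB (f g : R -> R) (x y : R) : f @ F --> x -> g @ F --> y -> (fun r => f r - g r) @ F --> x - y.
Proof. exact: cvgB. Qed.
Lemma cM (f g : R -> R) (x y : R) : f @ F --> x -> g @ F --> y -> (fun r => f r * g r) @ F --> x * y.
Proof. exact: cvgM. Qed.
Lemma cC (k : R) : (fun _ : R => k) @ F --> k.
Proof. exact: cvg_cst. Qed.
Lemma cV (f : R -> R) (x : R) : x != 0 -> f @ F --> x -> (fun r => (f r)^-1) @ F --> x^-1.
Proof. exact: cvgV. Qed.
End cv.

Lemma cId : (fun r : R => r) @ 0^'+ --> 0.
Proof.
apply: lim0Q => eps e0; exists eps; split => // r /andP [r0 re].
by rewrite subr0 gtr0_norm.
Qed.

Ltac climb := lazymatch goal with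
| |- (fun r => @?A r - @?B r) @ _ --> _ => apply: (@cB _ _); climb
| |- (fun r => @?A r + @?B r) @ _ --> _ => apply: (@cD _ _); climb
| |- (fun r => @?A r * @?B r) @ _ --> _ => apply: (@cM _ _); climb
| |- (fun r => r) @ _ --> _ => exact: cId
| |- (fun r => T ?x r) @ _ --> _ => apply: (@T_lim x); try done; try exact: ler01
| |- (fun _ => _) @ _ --> _ => apply: (@cC _ _)
| |- (T ?x) @ _ --> _ => apply: (@T_lim x); try done; try exact: ler01
| |- _ => idtac
end.
Variables (N a c : R).
Hypothesis N1 : N - 1 != 0.
Hypothesis HC : (N - 1) * (a + c) = 2 * N.
Definition Det r := (1 + (N-1) * E a r) * (1 + (N-1) * E c r) - (N * E 1 r) ^+ 2.
Definition G r := N*(N-1)*(T a r + T c r) + (N-1)^+2*a*c - N^+2 - 2*N^+2*T 1 r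
  - r*((N-1)^+2*(a*T c r + c*T a r) - 2*N^+2*T 1 r) + (r*r)*((N-1)^+2*T a r*T c r - N^+2*(T 1 r * T 1 r)).
Lemma DetG r : r != 0 -> Det r = r ^+ 2 * G r.
Proof.
move=> r0; rewrite /Det /G !(ET _ _ r0).
have -> : c = 2 * N / (N-1) - a by rewrite -HC; field.
field. exact: N1.
Qed.

Hypothesis a0 : 0 <= a.
Hypothesis c0 : 0 <= c.
Lemma G_lim : G @ 0^'+ --> (N-1) * (a^+2 + c^+2) / 2.
Proof.
have L : G @ 0^'+ --> N*(N-1)*(a^+2/2 + c^+2/2) + (N-1)^+2*a*c - N^+2 - 2*N^+2*(1^+2/2)
  - 0*((N-1)^+2*(a*(c^+2/2) + c*(a^+2/2)) - 2*N^+2*(1^+2/2)) + (0*0)*((N-1)^+2*(a^+2/2)*(c^+2/2) - N^+2*((1^+2/2) * (1^+2/2))).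
  rewrite /G.
  have Ta := @T_lim a a0; have Tc := @T_lim c c0; have T1 := @T_lim 1 ler01.
  climb.

suff E : N*(N-1)*(a^+2/2 + c^+2/2) + (N-1)^+2*a*c - N^+2 - 2*N^+2*(1^+2/2)
  - 0*((N-1)^+2*(a*(c^+2/2) + c*(a^+2/2)) - 2*N^+2*(1^+2/2)) + (0*0)*((N-1)^+2*(a^+2/2)*(c^+2/2) - N^+2*((1^+2/2) * (1^+2/2))) = (N-1) * (a^+2 + c^+2) / 2 by move: L; rewrite E.
have -> : c = 2 * N / (N-1) - a by rewrite -HC; field.
field. exact: N1.
Qed.

Definition NumF r := N*(2 + (N-1)*(E a r + E c r) - 2*N*E 1 r).
Definition H r := N*((N-1)*(T a r + T c r) - 2*N*T 1 r).
Lemma NumH r : r != 0 -> NumF r = r ^+ 2 * H r.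
Proof.
move=> r0; rewrite /NumF /H !(ET _ _ r0).
have -> : c = 2 * N / (N-1) - a by rewrite -HC; field.
field. exact: N1.
Qed.
Lemma H_lim : H @ 0^'+ --> N * ((N-1) * (a^+2 + c^+2) / 2 - N).
Proof.
have L : H @ 0^'+ --> N*((N-1)*(a^+2/2 + c^+2/2) - 2*N*(1^+2/2)).
  rewrite /H. climb.
suff E : N*((N-1)*(a^+2/2 + c^+2/2) - 2*N*(1^+2/2)) = N * ((N-1) * (a^+2 + c^+2) / 2 - N) by move: L; rewrite E.
by field.
Qed.

Definition Mag r := NumF r / Det r.
Definition Wl := N * ((N-1) * (a^+2 + c^+2) / 2 - N) / ((N-1) * (a^+2 + c^+2) / 2).

Hypothesis Q0 : 0 < (N-1) * (a^+2 + c^+2) / 2.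

Lemma Mag_lim : Mag @ 0^'+ --> Wl.
Proof.
have L : (fun r => H r * (G r)^-1) @ 0^'+ --> Wl.
  apply: cM; first exact: H_lim.
  by apply: cV; [rewrite gt_eqF | exact: G_lim].
apply: lim0Q => eps e0.
have [del [d0 Hd]] := @lim0P _ _ L eps e0.
exists del; split => // r /andP [r0 rd].
have -> : Mag r = H r * (G r)^-1.
  rewrite /Mag NumH ?DetG ?gt_eqF //.
  rewrite -mulf_div divff ?mul1r //.
  by rewrite expf_neq0 // gt_eqF.
by apply: Hd; rewrite r0.
Qed.

Lemma Det_pos : exists r0 : R, 0 < r0 /\ forall r, 0 < r < r0 -> 0 < Det r.
Proof.
have [del [d0 Hd]] := @lim0P _ _ G_lim _ Q0.
exists del; split => // r /andP [r0 rd].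
rewrite DetG ?gt_eqF //.
apply: mulr_gt0; first by rewrite exprn_gt0.
have := Hd r; rewrite r0 rd => /(_ isT).
move=> h; have := ler_norm (G r - (N - 1) * (a ^+ 2 + c ^+ 2) / 2).
rewrite -normrN opprB in h.
have := ler_norm ((N - 1) * (a ^+ 2 + c ^+ 2) / 2 - G r).
lra.
Qed.
End S.

Local Close Scope classical_set_scope.

Section C.
Variable R : realType.

Lemma mag_unique (X : finMetric R) s m1 m2 :
  scaled_magnitude X s m1 -> scaled_magnitude X s m2 -> m1 = m2.
Proof.
move=> [w1 [H1 <-]] [w2 [H2 <-]].
transitivity (\sum_(y < Defs.card X) w1 y * \sum_(x < Defs.card X) expR (- (s * dist X y x)) * w2 x).
  by apply: eq_bigr => y _; rewrite H2 mulr1.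
transitivity (\sum_(x < Defs.card X) w2 x * \sum_(y < Defs.card X) expR (- (s * dist X x y)) * w1 y); last first.
  by apply: eq_bigr => y _; rewrite H1 mulr1.
rewrite (eq_bigr (fun y => \sum_(x < Defs.card X) w1 y * (expR (- (s * dist X y x)) * w2 x))); last by move=> y _; rewrite mulr_sumr.
rewrite exchange_big /=.
apply: eq_bigr => x _; rewrite mulr_sumr; apply: eq_bigr => y _.
by rewrite dist_sym; ring.
Qed.

Variables (n : nat) (a c : R).
Hypothesis n2 : (2 <= n)%N.
Hypothesis a0 : 0 < a.
Hypothesis a2 : a <= 2.
Hypothesis c0 : 0 < c.
Hypothesis c2 : c <= 2.

Definition cls (i : 'I_(n + n)) : bool := (i < n)%N.
Definition cd (i j : 'I_(n + n)) : R :=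
  if i == j then 0 else if cls i then (if cls j then a else 1) else (if cls j then 1 else c).

Lemma cd_self i : cd i i = 0. Proof. by rewrite /cd eqxx. Qed.
Lemma cd_sym i j : cd i j = cd j i.
Proof. by rewrite /cd eq_sym; case: (j == i) => //; case: (cls i); case: (cls j). Qed.
Lemma cd_pos i j : i != j -> 0 < cd i j.
Proof. by rewrite /cd => /negbTE ->; case: (cls i); case: (cls j). Qed.
Lemma cd_ge0 i j : 0 <= cd i j.
Proof. by case: (i =P j) => [->|/eqP h]; [rewrite cd_self | exact/ltW/cd_pos]. Qed.
Lemma cd_le2 i j : cd i j <= 2.
Proof. rewrite /cd; case: (i == j) => //; case: (cls i); case: (cls j) => //; lra. Qed.
Lemma cd_tri i j k : cd i k <= cd i j + cd j k.
Proof.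
case: (i =P k) => [->|ik]; first by rewrite cd_self addr_ge0 // cd_ge0.
case: (i =P j) => [->|ij]; first by rewrite cd_self add0r.
case: (j =P k) => [->|jk]; first by rewrite cd_self addr0.
rewrite /cd; move/eqP/negbTE: ik => ->; move/eqP/negbTE: ij => ->; move/eqP/negbTE: jk => ->.
case: (cls i); case: (cls j); case: (cls k) => /=; move: a0 a2 c0 c2; lra.
Qed.

Variable tau : R.
Hypothesis tau0 : 0 < tau.

Definition Yc : finMetric R.
refine (@FinMetric R (n + n) (fun i j => tau * cd i j) _ _ _ _).
- by move=> x; rewrite cd_self mulr0.
- by move=> x y; rewrite cd_sym.
- by move=> x y h; rewrite mulr_gt0 // cd_pos.
- by move=> x y z; rewrite -mulrDr ler_pM2l // cd_tri.
Defined.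


Lemma sum_delta (m : nat) (j : 'I_m) (u v : R) :
  \sum_(i < m) (if j == i then u else v) = u + (m%:R - 1) * v.
Proof.
rewrite (bigD1 j) //= eqxx; congr (_ + _).
rewrite (eq_bigr (fun _ => v)); last by move=> i; rewrite eq_sym => /negbTE ->.
rewrite sumr_const cardC1 card_ord.
case: m j => [[]//|m] j /=.
by rewrite -mulr_natl -[m.+1]addn1 natrD; ring.
Qed.

Lemma sum_const_ord (m : nat) (k : R) : \sum_(i < m) k = m%:R * k.
Proof. by rewrite sumr_const card_ord mulr_natl. Qed.

Lemma cls_l (i : 'I_n) : cls (lshift n i) = true.
Proof. by rewrite /cls /= ltn_ord. Qed.
Lemma cls_r (i : 'I_n) : cls (rshift n i) = false.
Proof. by rewrite /cls /= ltnNge leq_addr. Qed.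
Lemma lr_neq (j i : 'I_n) : (lshift n j == rshift n i) = false.
Proof. by apply/negbTE; apply/eqP => h; have := cls_l j; rewrite h cls_r. Qed.
Lemma ll_eq (j i : 'I_n) : (lshift n j == lshift n i) = (j == i).
Proof. by apply/idP/idP => [/eqP/lshift_inj ->|/eqP ->]. Qed.
Lemma rr_eq (j i : 'I_n) : (rshift n j == rshift n i) = (j == i).
Proof. by apply/idP/idP => [/eqP/rshift_inj ->|/eqP ->]. Qed.

Let N : R := n%:R.

Lemma Yc_weight s : 0 < s -> Det R N a c (s*tau) != 0 ->
  scaled_magnitude Yc s (Mag R N a c (s*tau)).
Proof.
move=> s0 D0.
set r := s * tau.
set A := 1 + (N-1) * E R a r.
set C := 1 + (N-1) * E R c r.
set B := N * E R 1 r.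
have DE : Det R N a c r = A * C - B ^+ 2 by [].
set e := (C - B) / Det R N a c r.
set p := (A - B) / Det R N a c r.
have Zs : forall x : R, expR (- (s * (tau * x))) = E R x r.
  by move=> x; rewrite /E /r mulrA.
exists (fun i => if cls i then e else p); split.
- move=> x; rewrite big_split_ord /=.
  move: x; change ('I_(Defs.card Yc)) with ('I_(n + n)) => x.
  case: (split_ordP x) => j ->; rewrite /cd.
  + under eq_bigr do rewrite ll_eq !cls_l.
    under [X in _ + X]eq_bigr do rewrite lr_neq cls_l !cls_r.
    rewrite (eq_bigr (fun i => (if j == i then 1 else E R a r) * e)); last first.
      by move=> i _; case: (j == i); rewrite ?mulr0 ?oppr0 ?expR0 ?Zs.
    rewrite -mulr_suml sum_delta sum_const_ord Zs.
    rewrite /e /p -/N DE /A /B /C; field; by rewrite -/A -/B -/C -DE.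
  + under eq_bigr do rewrite eq_sym lr_neq cls_l !cls_r.
    under [X in _ + X]eq_bigr do rewrite rr_eq !cls_r.
    rewrite [X in _ + X](eq_bigr (fun i => (if j == i then 1 else E R c r) * p)); last first.
      by move=> i _; case: (j == i); rewrite ?mulr0 ?oppr0 ?expR0 ?Zs.
    rewrite -[X in _ + X]mulr_suml sum_delta sum_const_ord Zs.
    rewrite /e /p -/N DE /A /B /C; field; by rewrite -/A -/B -/C -DE.
- rewrite big_split_ord /=.
  under eq_bigr do rewrite cls_l.
  under [X in _ + X]eq_bigr do rewrite cls_r.
  rewrite !sum_const_ord /Mag /NumF /e /p -/N DE /A /B /C; field; by rewrite -/A -/B -/C -DE.
Qed.
End C.


Section Ext.
Variable R : realType.
Variable Y : finMetric R.
Variable h : 'I_(Defs.card Y) -> R.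
Hypothesis h0 : forall y, 0 < h y.
Hypothesis h1 : forall y y', h y <= h y' + dist Y y' y.
Hypothesis h2 : forall y y', dist Y y y' <= h y + h y'.

Definition extd (i j : 'I_(Defs.card Y).+1) : R :=
  match unlift ord0 i, unlift ord0 j with
  | Some x, Some y => dist Y x y
  | Some x, None => h x
  | None, Some y => h y
  | None, None => 0 end.

Lemma extd_SS x y : extd (lift ord0 x) (lift ord0 y) = dist Y x y.
Proof. by rewrite /extd !liftK. Qed.
Lemma extd_SN x : extd (lift ord0 x) ord0 = h x.
Proof. by rewrite /extd liftK unlift_none. Qed.
Lemma extd_NS x : extd ord0 (lift ord0 x) = h x.
Proof. by rewrite /extd liftK unlift_none. Qed.
Lemma extd_NN : extd ord0 ord0 = 0.
Proof. by rewrite /extd unlift_none. Qed.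

Definition extM : finMetric R.
refine (@FinMetric R (Defs.card Y).+1 extd _ _ _ _).
- move=> x; case: (unliftP ord0 x) => [y ->|->].
  + by rewrite extd_SS dist_self.
  + by rewrite extd_NN.
- move=> x y; case: (unliftP ord0 x) => [x' ->|->]; case: (unliftP ord0 y) => [y' ->|->];
    by rewrite ?extd_SS ?extd_SN ?extd_NS ?extd_NN // dist_sym.
- move=> x y; case: (unliftP ord0 x) => [x' ->|->]; case: (unliftP ord0 y) => [y' ->|->];
    rewrite ?extd_SS ?extd_SN ?extd_NS ?extd_NN ?eqxx //.
  move=> hxy; apply: dist_pos; apply: contraNneq hxy => ->; by [].
- move=> x y z.
  case: (unliftP ord0 x) => [x' ->|->]; case: (unliftP ord0 y) => [y' ->|->];
    case: (unliftP ord0 z) => [z' ->|->];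
    rewrite ?extd_SS ?extd_SN ?extd_NS ?extd_NN.
  + exact: dist_tri.
  + have := h1 x' y'; rewrite dist_sym; lra.
  + exact: h2.
  + lra.
  + have := h1 z' y'; lra.
  + have := h0 y'; lra.
  + lra.
  + lra.
Defined.

Lemma sum_ext (F : 'I_(Defs.card Y).+1 -> R) :
  \sum_(i < Defs.card extM) F i = F ord0 + \sum_(y < Defs.card Y) F (lift ord0 y).
Proof. by rewrite big_ord_recl. Qed.

End Ext.

Section Prod.
Variable R : realType.
Lemma dist_ge0 (X : finMetric R) x y : 0 <= dist X x y.
Proof. by case: (x =P y) => [->|/eqP h]; [rewrite dist_self | exact/ltW/dist_pos]. Qed.

Lemma sum_dl (m : nat) (f w : 'I_m -> R) (p : 'I_m) (k : R) :
  \sum_(y < m) f y * (w y + (if y == p then k else 0)) = \sum_(y < m) f y * w y + f p * k.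
Proof.
rewrite (eq_bigr (fun y => f y * w y + (if y == p then f p * k else 0))); last first.
  by move=> y _; case: (y =P p) => [->|_]; rewrite ?mulr0 ?addr0 // mulrDr.
rewrite big_split /=; congr (_ + _).
rewrite (bigD1 p) //= eqxx big1 ?addr0 //.
by move=> y /negbTE ->.
Qed.

Variable Y : finMetric R.
Variable D : R.
Hypothesis D0 : 0 < D.
Hypothesis Hd : forall y y', dist Y y y' <= 2 * D.

Lemma ph0 : forall y : 'I_(Defs.card Y), 0 < (fun _ => D) y. Proof. by []. Qed.
Lemma ph1 : forall y y', (fun _ => D) y <= (fun _ => D) y' + dist Y y' y.
Proof. by move=> y y' /=; rewrite lerDl dist_ge0. Qed.
Lemma ph2 : forall y y', dist Y y y' <= (fun _ => D) y + (fun _ => D) y'.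
Proof. by move=> y y' /=; have := Hd y y'; lra. Qed.

Definition prodM := @extM R Y (fun _ => D) ph0 ph1 ph2.

Lemma prod_weight s (w : 'I_(Defs.card Y) -> R) M :
  (forall x, \sum_(y < Defs.card Y) expR (- (s * dist Y x y)) * w y = 1) ->
  \sum_(y < Defs.card Y) w y = M ->
  1 - expR (- (s * D)) ^+ 2 * M != 0 ->
  scaled_magnitude prodM s ((M + 1 - 2 * expR (- (s * D)) * M) / (1 - expR (- (s * D)) ^+ 2 * M)).
Proof.
move=> Hw HM den0.
set q := expR (- (s * D)).
set den := 1 - q ^+ 2 * M.
exists (fun i => match unlift ord0 i with Some y => (1 - q) / den * w y | None => (1 - q * M) / den end).
split.
- move=> x; rewrite sum_ext /=.
  case: (unliftP ord0 x) => [x' ->|->].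
  + rewrite extd_SN unlift_none.
    under eq_bigr do rewrite extd_SS liftK mulrCA.
    rewrite -mulr_sumr Hw -/q /den; field; exact: den0.
  + rewrite extd_NN unlift_none.
    under eq_bigr do rewrite extd_NS liftK -/q mulrCA.
    rewrite -mulr_sumr -mulr_sumr HM mulr0 oppr0 expR0 /den; field; exact: den0.
- rewrite sum_ext /= unlift_none.
  under eq_bigr do rewrite liftK.
  rewrite -mulr_sumr HM /den; field; exact: den0.
Qed.
End Prod.

Section Wedge.
Variable R : realType.
Variable Y : finMetric R.
Variable p : 'I_(Defs.card Y).
Variable D : R.
Hypothesis D0 : 0 < D.

Lemma wh0 : forall y, 0 < (fun y => D + dist Y p y) y.
Proof. by move=> y /=; have := @dist_ge0 _ _ p y; have := D0; lra. Qed.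
Lemma wh1 : forall y y', (fun y => D + dist Y p y) y <= (fun y => D + dist Y p y) y' + dist Y y' y.
Proof. by move=> y y' /=; have := @dist_tri _ _ p y' y; lra. Qed.
Lemma wh2 : forall y y', dist Y y y' <= (fun y => D + dist Y p y) y + (fun y => D + dist Y p y) y'.
Proof. by move=> y y' /=; have := @dist_tri _ _ y p y'; rewrite (@dist_sym _ _ y p); have := D0; lra. Qed.

Definition wedgeM := @extM R Y (fun y => D + dist Y p y) wh0 wh1 wh2.

Lemma wedge_weight s (w : 'I_(Defs.card Y) -> R) M :
  (forall x, \sum_(y < Defs.card Y) expR (- (s * dist Y x y)) * w y = 1) ->
  \sum_(y < Defs.card Y) w y = M ->
  scaled_magnitude wedgeM s (M + 2 / (1 + expR (- (s * D))) - 1).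
Proof.
move=> Hw HM.
set q := expR (- (s * D)).
have q0 : 0 < q by exact: expR_gt0.
have den0 : 1 + q != 0 by rewrite gt_eqF // ltr_pwDr.
set b := 1 / (1 + q).
have Eq : forall y, expR (- (s * (D + dist Y p y))) = q * expR (- (s * dist Y p y)).
  by move=> y; rewrite mulrDr opprD expRD.
exists (fun i => match unlift ord0 i with Some y => w y + (if y == p then b - 1 else 0) | None => b end).
split.
- move=> x; rewrite sum_ext /=.
  case: (unliftP ord0 x) => [x' ->|->].
  + rewrite extd_SN unlift_none Eq.
    under eq_bigr do rewrite extd_SS liftK.
    rewrite sum_dl Hw dist_sym /b; field; exact: den0.
  + rewrite extd_NN unlift_none mulr0 oppr0 expR0 mul1r.
    under eq_bigr do rewrite extd_NS liftK Eq -mulrA.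
    rewrite -mulr_sumr sum_dl Hw dist_self mulr0 oppr0 expR0 /b; field; exact: den0.
- rewrite sum_ext /= unlift_none.
  under eq_bigr do rewrite liftK.
  rewrite big_split /= HM (bigD1 p) //= eqxx big1 ?addr0; last by move=> y /negbTE ->.
  rewrite /b; field; exact: den0.
Qed.
End Wedge.


Section P.
Variable R : realType.

Lemma params (W0 : R) : 1 < W0 -> exists n (a c : R),
  [/\ (2 <= n)%N, 0 < a, a <= 2, 0 < c & c <= 2] /\
  [/\ (n%:R - 1) * (a + c) = 2 * n%:R, 0 < (n%:R - 1) * (a^+2 + c^+2) / 2
    & Wl R n%:R a c = W0].
Proof.
move=> W1.
have W00 : 0 <= 4 * W0 + 5 by lra.
set n := Num.bound (4 * W0 + 5).
have Hn : 4 * W0 + 5 < n%:R := archi_boundP W00.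
set N : R := n%:R.
have N2 : (2 <= n)%N by rewrite -(ler_nat R); rewrite -/N; lra.
set K := N - 1.
have K0 : 0 < K by rewrite /K; lra.
have NW : 0 < N - W0 by lra.
set D := N^+2 * (W0 - 1) / (K^+2 * (N - W0)).
have D0 : 0 <= D by rewrite /D divr_ge0 ?mulr_ge0 ?exprn_ge0 //; lra.
set d := Num.sqrt D.
have d0 : 0 <= d := sqrtr_ge0 D.
have dd : d ^+ 2 = D := sqr_sqrtr D0.
have dle : d <= (N - 2) / K.
  have H1 : D <= ((N - 2) / K) ^+ 2.
    rewrite /D expr_div_n ler_pdivrMr ?mulr_gt0 ?exprn_gt0 //.
    have -> : (N - 2) ^+ 2 / K ^+ 2 * (K ^+ 2 * (N - W0)) = (N-2)^+2 * (N - W0).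
      by field; rewrite gt_eqF.
    have : N^+2 * (W0 - 1) <= (N - 2)^+2 * (N - W0) by nra.
    lra.
  have H2 : 0 <= (N - 2) / K by rewrite divr_ge0 //; lra.
  nra.
exists n, (N / K + d), (N / K - d).
split; first split => //.
- have : 0 < N / K by rewrite divr_gt0 //; lra.
  lra.
- have : (N - 2) / K + N / K = 2 by rewrite /K; field; lra.
  lra.
- have : N / K - (N - 2) / K = 2 / K by rewrite /K; field; lra.
  have : 0 < 2 / K by rewrite divr_gt0.
  lra.
- have : N / K <= 2 by rewrite ler_pdivrMr //; rewrite /K; lra.
  lra.
have Q : (N / K + d) ^+ 2 + (N / K - d) ^+ 2 = 2 * N^+2 / (K * (N - W0)).
  have -> : (N / K + d) ^+ 2 + (N / K - d) ^+ 2 = 2 * (N / K)^+2 + 2 * d^+2 by ring.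
  rewrite dd /D /K; field; rewrite -/K; apply/andP; split; rewrite gt_eqF //.
split.
- rewrite -/N -/K; field; rewrite gt_eqF //.
- rewrite -/N -/K Q; apply: divr_gt0 => //; apply: mulr_gt0 => //.
  by apply: divr_gt0; [rewrite mulr_gt0 // exprn_gt0; lra | rewrite mulr_gt0].
- rewrite /Wl -/N -/K Q; field.
  by apply/andP; split; rewrite gt_eqF //; lra.
Qed.
End P.


Local Open Scope classical_set_scope.

Section G.
Variable R : realType.

Lemma min3 (a b c : R) : 0 < a -> 0 < b -> 0 < c ->
  exists t, [/\ 0 < t, t < a, t < b & t < c].
Proof.
move=> a0 b0 c0.
set m := Num.min a (Num.min b c).
have m0 : 0 < m by rewrite /m !lt_min a0 b0 c0.
have ma : m <= a by rewrite /m ge_min lexx.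
have mb : m <= b by rewrite /m ge_min ge_min lexx orbT.
have mc : m <= c by rewrite /m ge_min ge_min lexx !orbT.
exists (m / 2); split; lra.
Qed.

Lemma fX_unique (X : R -> finMetric R) s v1 v2 : fX X s v1 -> fX X s v2 -> v1 = v2.
Proof.
move=> [[e [e0 He]] H1] [_ H2].
suff H : forall eps : R, 0 < eps -> `|v1 - v2| < eps.
  apply/eqP; rewrite -subr_eq0 -normr_eq0 eq_le normr_ge0 andbT leNgt.
  by apply/negP => h; have := H _ h; rewrite ltxx.
move=> eps e1.
have e2 : 0 < eps / 2 by rewrite divr_gt0.
have [d1 [d10 Hd1]] := H1 _ e2.
have [d2 [d20 Hd2]] := H2 _ e2.
have [t [t0 te td1 td2]] := @min3 e d1 d2 e0 d10 d20.
have := He t; rewrite t0 te => /(_ isT) [m Hm].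
have := Hd1 t m; rewrite t0 td1 => /(_ isT Hm).
have := Hd2 t m; rewrite t0 td2 => /(_ isT Hm).
have := ler_distD m v1 v2.
rewrite (distrC v1 m).
lra.
Qed.

Lemma GH_ext (Y : finMetric R) h h0 h1 h2 (y0 : 'I_(Defs.card Y)) (de eps : R) :
  (forall y y', dist Y y y' <= de) -> (forall y, `|h y - 1| <= de) -> de < 2 * eps ->
  GH_lt (@extM R Y h h0 h1 h2) (K2 R) eps.
Proof.
move=> Hd Hh dee.
have de0 : 0 <= de by have := Hh y0; have := normr_ge0 (h y0 - 1); lra.
exists (fun (i : 'I_(Defs.card Y).+1) (j : 'I_2) => j == (if unlift ord0 i is Some _ then ord0 else ord_max)).
split; first split.
- by move=> x; eexists; apply: eqxx.
- case=> [[|[|//]]] Hy.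
  + exists (lift ord0 y0); rewrite liftK; apply/eqP; exact: val_inj.
  + exists ord0; rewrite unlift_none; apply/eqP; exact: val_inj.
- move=> x x' y y' /eqP -> /eqP ->.
  case: (unliftP ord0 x) => [u ->|->]; case: (unliftP ord0 x') => [u' ->|->];
    rewrite ?liftK ?unlift_none /=.
  + rewrite extd_SS /K2_dist eqxx subr0 ger0_norm ?dist_ge0 //.
    by have := Hd u u'; lra.
  + rewrite extd_SN /K2_dist /=; by have := Hh u; lra.
  + rewrite extd_NS /K2_dist /=; by have := Hh u'; lra.
  + rewrite extd_NN /K2_dist eqxx subr0 normr0; lra.
Qed.
End G.

Section Cl.
Variable R : realType.
Variables (n : nat) (a c : R).
Hypotheses (n2 : (2 <= n)%N) (a0 : 0 < a) (a2 : a <= 2) (c0 : 0 < c) (c2 : c <= 2).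
Hypothesis HC : (n%:R - 1) * (a + c) = 2 * n%:R.
Hypothesis Q0 : 0 < (n%:R - 1) * (a^+2 + c^+2) / 2.

Lemma N1 : (n%:R : R) - 1 != 0.
Proof. have : (2%:R : R) <= n%:R by rewrite ler_nat. move=> h; rewrite gt_eqF //; lra. Qed.

Definition tau (t : R) : R := if (0 < t) && (t < 1) then t else 1/2.
Lemma tau_gt0 t : 0 < tau t.
Proof. by rewrite /tau; case: ifP => [/andP []|_] //; lra. Qed.
Lemma tau_le1 t : tau t <= 1.
Proof. by rewrite /tau; case: ifP => [/andP [] _ /ltW|_] //; lra. Qed.
Lemma tau_eq t : 0 < t < 1 -> tau t = t.
Proof. by rewrite /tau => ->. Qed.

Definition Yt t := Yc R n a c a0 a2 c0 c2 (tau t) (tau_gt0 t).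
Lemma p0_lt : (0 < n + n)%N.
Proof. by rewrite addn_gt0; apply/orP; left; apply: leq_trans n2. Qed.
Definition p0 : 'I_(n + n) := Ordinal p0_lt.
Definition Xw t := wedgeM R (Yt t) p0 1 ltr01.
Lemma Yt_diam t y y' : dist (Yt t) y y' <= 2 * 1.
Proof.
rewrite /= mulr1; have := tau_le1 t; have := tau_gt0 t.
have := @cd_le2 R n a c a2 c2 y y'; have := @cd_ge0 R n a c a0 c0 y y'.
move=> h1 h2 h3 h4; nra.
Qed.
Definition Xp t := prodM R (Yt t) 1 ltr01 (@Yt_diam t).

Let MagL := Mag_lim R n%:R a c N1 HC (ltW a0) (ltW c0) Q0.

Lemma Det_ev : exists r0 : R, 0 < r0 /\ forall r, 0 < r < r0 -> Det R n%:R a c r != 0.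
Proof.
have [r0 [r00 H]] := Det_pos R n%:R a c N1 HC (ltW a0) (ltW c0) Q0.
by exists r0; split => // r hr; rewrite gt_eqF // H.
Qed.

Lemma small_t (s r0 t : R) : 0 < s -> 0 < r0 -> 0 < t -> t < 1 -> t < r0 / s -> 0 < s * t < r0.
Proof.
move=> s0 r00 t0 t1 ts; rewrite mulr_gt0 //=.
by move: ts; rewrite ltr_pdivlMr // mulrC.
Qed.

Lemma Yt_weight s t : 0 < s -> 0 < t -> t < 1 -> Det R n%:R a c (s * t) != 0 ->
  exists w, (forall x, \sum_(y < Defs.card (Yt t)) expR (- (s * dist (Yt t) x y)) * w y = 1)
    /\ \sum_(y < Defs.card (Yt t)) w y = Mag R n%:R a c (s * t).
Proof.
move=> s0 t0 t1 D0.
have te : tau t = t by rewrite tau_eq // t0 t1.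
have D0' : Det R n%:R a c (s * tau t) != 0 by rewrite te.
have [w [Hw HM]] := @Yc_weight R n a c a0 a2 c0 c2 (tau t) (tau_gt0 t) s s0 D0'.
by exists w; split => //; rewrite HM te.
Qed.

Lemma Xw_fX s : 0 < s -> fX Xw s (Wl R n%:R a c + 2 / (1 + expR (- (s * 1))) - 1).
Proof.
move=> s0.
have [r0 [r00 Hr]] := Det_ev.
have rs : 0 < r0 / s by rewrite divr_gt0.
have Hex : forall t, 0 < t -> t < 1 -> t < r0 / s ->
    scaled_magnitude (Xw t) s (Mag R n%:R a c (s * t) + 2 / (1 + expR (- (s * 1))) - 1).
  move=> t t0 t1 ts.
  have st := @small_t s r0 t s0 r00 t0 t1 ts.
  have [w [Hw HM]] := @Yt_weight s t s0 t0 t1 (Hr _ st).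
  exact: (@wedge_weight R (Yt t) p0 1 ltr01 s w _ Hw HM).
split.
- exists (Num.min 1 (r0 / s)); split; first by rewrite lt_min ltr01 rs.
  move=> t /andP [t0]; rewrite lt_min => /andP [t1 ts].
  by eexists; apply: Hex.
- move=> eps e0.
  have [del [d0 Hd]] := lim0P R _ _ MagL eps e0.
  have ds : 0 < del / s by rewrite divr_gt0.
  have [t1 [t10 t11 t12 t13]] := @min3 _ 1 (r0 / s) (del / s) ltr01 rs ds.
  exists t1; split => // t m /andP [t0 tt] Hm.
  have Ht1 : t < 1 by lra.
  have Ht2 : t < r0 / s by lra.
  have Ht3 : t < del / s by lra.
  have := Hex t t0 Ht1 Ht2 => Hm2.
  rewrite (mag_unique R _ _ _ _ Hm Hm2).
  have : 0 < s * t < del by rewrite mulr_gt0 //=; move: Ht3; rewrite ltr_pdivlMr // mulrC.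
  move/Hd; congr (_ < _); congr (`| _ |); ring.
Qed.

Lemma Yt_dist t y y' : 0 < t -> t < 1 -> dist (Yt t) y y' <= 2 * t.
Proof.
move=> t0 t1; rewrite /= tau_eq ?t0 ?t1 //.
have := @cd_le2 R n a c a2 c2 y y'; move=> h; nra.
Qed.

Lemma Xw_GH : GH_conv Xw (K2 R).
Proof.
move=> eps e0.
exists (Num.min 1 eps); split; first by rewrite lt_min ltr01 e0.
move=> t /andP [t0]; rewrite lt_min => /andP [t1 te].
rewrite /Xw /wedgeM.
apply: (@GH_ext R (Yt t) _ _ _ _ p0 (2 * t)).
- by move=> y y'; apply: Yt_dist.
- move=> y; rewrite addrC addKr ger0_norm ?dist_ge0 //; exact: Yt_dist.
- lra.
Qed.

Lemma Xp_GH : GH_conv Xp (K2 R).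
Proof.
move=> eps e0.
exists (Num.min 1 eps); split; first by rewrite lt_min ltr01 e0.
move=> t /andP [t0]; rewrite lt_min => /andP [t1 te].
rewrite /Xp /prodM.
apply: (@GH_ext R (Yt t) _ _ _ _ p0 (2 * t)).
- by move=> y y'; apply: Yt_dist.
- move=> y; rewrite subrr normr0; lra.
- lra.
Qed.

Ltac climbM L := lazymatch goal with
| |- (fun r => @?A r - @?B r) @ _ --> _ => apply: (@cB _ _); climbM L
| |- (fun r => @?A r + @?B r) @ _ --> _ => apply: (@cD _ _); climbM L
| |- (fun r => @?A r * @?B r) @ _ --> _ => apply: (@cM _ _); climbM L
| |- (fun r => Mag _ _ _ _ r) @ _ --> _ => exact: L
| |- (Mag _ _ _ _) @ _ --> _ => exact: L
| |- (fun _ => _) @ _ --> _ => apply: (@cC _ _)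
| |- _ => idtac
end.

Definition Fq (q M : R) := (M + 1 - 2 * q * M) / (1 - q ^+ 2 * M).

Lemma Xp_fX s : 0 < s -> 1 - expR (- (s * 1)) ^+ 2 * Wl R n%:R a c != 0 ->
  fX Xp s (Fq (expR (- (s * 1))) (Wl R n%:R a c)).
Proof.
move=> s0 L0.
set q := expR (- (s * 1)).
set L := Wl R n%:R a c.
have gL : (fun r => 1 - q ^+ 2 * Mag R n%:R a c r) @ 0^'+ --> 1 - q ^+ 2 * L.
  climbM MagL.
have FL : (fun r => (Mag R n%:R a c r + 1 - 2 * q * Mag R n%:R a c r) *
     (1 - q ^+ 2 * Mag R n%:R a c r)^-1) @ 0^'+ --> (L + 1 - 2 * q * L) * (1 - q ^+ 2 * L)^-1.
  apply: (@cM _ _); first by climbM MagL.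
  by apply: (@cV _ _) => //.
have nL : 0 < `|1 - q ^+ 2 * L| by rewrite normr_gt0.
have [r1 [r10 Hr1]] := lim0P R _ _ gL _ nL.
have [r0 [r00 Hr]] := Det_ev.
set r2 := Num.min r0 r1.
have r20 : 0 < r2 by rewrite lt_min r00 r10.
have rs : 0 < r2 / s by rewrite divr_gt0.
have Hex : forall t, 0 < t -> t < 1 -> t < r2 / s ->
    scaled_magnitude (Xp t) s (Fq q (Mag R n%:R a c (s * t))).
  move=> t t0 t1 ts.
  have st := @small_t s r2 t s0 r20 t0 t1 ts.
  have st0 : 0 < s * t < r0.
    by move: st => /andP [-> h]; move: h; rewrite lt_min => /andP [].
  have st1 : 0 < s * t < r1.
    by move: st => /andP [-> h]; move: h; rewrite lt_min => /andP [].
  have [w [Hw HM]] := @Yt_weight s t s0 t0 t1 (Hr _ st0).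
  have D1 : 1 - q ^+ 2 * Mag R n%:R a c (s * t) != 0.
    apply/eqP => h; have := Hr1 _ st1; rewrite h sub0r normrN ltxx //.
  exact: (@prod_weight R (Yt t) 1 ltr01 (@Yt_diam t) s w _ Hw HM D1).
split.
- exists (Num.min 1 (r2 / s)); split; first by rewrite lt_min ltr01 rs.
  move=> t /andP [t0]; rewrite lt_min => /andP [t1 ts].
  by eexists; apply: Hex.
- move=> eps e0.
  have [del [d0 Hd]] := lim0P R _ _ FL eps e0.
  have ds : 0 < del / s by rewrite divr_gt0.
  have [t1 [t10 t11 t12 t13]] := @min3 _ 1 (r2 / s) (del / s) ltr01 rs ds.
  exists t1; split => // t m /andP [t0 tt] Hm.
  have Ht1 : t < 1 by lra.
  have Ht2 : t < r2 / s by lra.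
  have Ht3 : t < del / s by lra.
  have := Hex t t0 Ht1 Ht2 => Hm2.
  rewrite (mag_unique R _ _ _ _ Hm Hm2).
  have : 0 < s * t < del by rewrite mulr_gt0 //=; move: Ht3; rewrite ltr_pdivlMr // mulrC.
  by move/Hd.
Qed.
End Cl.

Local Close Scope classical_set_scope.

Theorem theorem2p7 (R : realType) :
  (forall l : R, 1 < l ->
     exists X : R -> finMetric R, GH_conv X (K2 R) /\ fX_lim0 X l)
  /\ (forall L : R, 2 < L ->
     exists X : R -> finMetric R, GH_conv X (K2 R) /\ fX_limoo X L)
  /\ (forall S : R, 0 < S ->
     exists X : R -> finMetric R, GH_conv X (K2 R) /\ fX_singular X S).
Proof.
split; [|split].
- move=> l l1.
  have [n [a [c [[n2 a0 a2 c0 c2] [HC Q0 Wq]]]]] := params R l l1.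
  exists (Xw R n a c n2 a0 a2 c0 c2); split; first exact: Xw_GH.
  split.
  + exists 1; split => // s /andP [s0 _].
    by eexists; apply: (@Xw_fX R n a c n2 a0 a2 c0 c2 HC Q0 s s0).
  + move=> eps e0; exists eps; split => // s v /andP [s0 se] Hv.
    have Hv2 := @Xw_fX R n a c n2 a0 a2 c0 c2 HC Q0 s s0.
    rewrite (fX_unique R _ _ _ _ Hv Hv2) Wq.
    set q := expR (- (s * 1)).
    have q0 : 0 < q := expR_gt0 _.
    have q1 : 1 - s <= q by have := expR_ge1Dx (- (s * 1)); rewrite -/q; lra.
    have q2 : q <= 1 by rewrite /q expR_le1 oppr_le0 mulr1 ltW.
    have -> : l + 2 / (1 + q) - 1 - l = (1 - q) / (1 + q) by field; rewrite gt_eqF //; lra.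
    rewrite ger0_norm; last by rewrite divr_ge0 //; lra.
    apply: (@le_lt_trans _ _ (1 - q)); last by lra.
    rewrite ler_pdivrMr; last by lra.
    nra.
- move=> L L2.
  have L1 : 1 < L - 1 by lra.
  have [n [a [c [[n2 a0 a2 c0 c2] [HC Q0 Wq]]]]] := params R (L - 1) L1.
  exists (Xw R n a c n2 a0 a2 c0 c2); split; first exact: Xw_GH.
  split.
  + exists 0 => s s0.
    by eexists; apply: (@Xw_fX R n a c n2 a0 a2 c0 c2 HC Q0 s s0).
  + move=> eps e0; exists (2 / eps) => s v s2 Hv.
    have s0 : 0 < s by apply: lt_trans s2; rewrite divr_gt0.
    have Hv2 := @Xw_fX R n a c n2 a0 a2 c0 c2 HC Q0 s s0.
    rewrite (fX_unique R _ _ _ _ Hv Hv2) Wq.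
    set q := expR (- (s * 1)).
    have q0 : 0 < q := expR_gt0 _.
    have eq : q * expR s = 1 by rewrite /q mulr1 mulrC expRxMexpNx_1.
    have es : 1 + s <= expR s := expR_ge1Dx s.
    have se : 2 < s * eps by move: s2; rewrite ltr_pdivrMr.
    have -> : L - 1 + 2 / (1 + q) - 1 - L = - (2 * q / (1 + q)) by field; rewrite gt_eqF //; lra.
    rewrite normrN ger0_norm; last by rewrite divr_ge0 //; lra.
    apply: (@le_lt_trans _ _ (2 * q)).
      rewrite ler_pdivrMr; last by lra.
      nra.
    nra.
- move=> S S0.
  set E := expR S.
  have E1 : 1 < E by rewrite /E pexpR_gt1.
  have W1 : 1 < E ^+ 2 by nra.
  have [n [a [c [[n2 a0 a2 c0 c2] [HC Q0 Wq]]]]] := params R (E ^+ 2) W1.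
  exists (Xp R n a c a0 a2 c0 c2); split; first exact: (@Xp_GH R n a c n2 a0 a2 c0 c2).
  have qE : forall s, expR (- (s * 1)) * E = expR (S - s).
    by move=> s; rewrite /E -expRD mulr1 addrC.
  have nz : forall s, s != S -> 1 - expR (- (s * 1)) ^+ 2 * Wl R n%:R a c != 0.
    move=> s sS; rewrite Wq -exprMn qE.
    have u0 : 0 < expR (S - s) := expR_gt0 _.
    have u1 : expR (S - s) != 1.
      apply/negP => /eqP h.
      have h2 : S - s = 0 by apply: expR_inj; rewrite h expR0.
      have h3 : s = S by lra.
      by rewrite h3 eqxx in sS.
    apply/eqP => h.
    have : (1 - expR (S - s)) * (1 + expR (S - s)) = 0 by rewrite -h; ring.
    move/eqP; rewrite mulf_eq0 => /orP [/eqP h1|/eqP h1]; last by lra.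
    by move: u1; rewrite (_ : expR (S - s) = 1) ?eqxx //; lra.
  split.
  + exists S; split => // s s0 /andP [sS _].
    have sS' : s != S by apply/eqP => h; move: sS; rewrite h subrr normr0 ltxx.
    by eexists; apply: (@Xp_fX R n a c n2 a0 a2 c0 c2 HC Q0 s s0 (nz _ sS')).
  + move=> B del d0.
    set h := Num.min (del / 2) ((E - 1) ^+ 2 / (2 * (`|B| + 1))).
    have B0 : 0 < `|B| + 1 by have := normr_ge0 B; lra.
    have h0 : 0 < h.
      rewrite lt_min divr_gt0 //= divr_gt0 //; last by lra.
      by rewrite exprn_gt0 //; lra.
    have hd : h <= del / 2 by rewrite /h ge_min lexx.
    have hB : h <= (E - 1) ^+ 2 / (2 * (`|B| + 1)) by rewrite /h ge_min lexx orbT.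
    have s0 : 0 < S + h by lra.
    have sS : S + h != S by rewrite gt_eqF //; lra.
    exists (S + h), (Fq R (expR (- ((S + h) * 1))) (Wl R n%:R a c)).
    split => //.
    * rewrite addrC addKr ger0_norm; last by lra.
      by rewrite h0 /=; lra.
    * exact: (@Xp_fX R n a c n2 a0 a2 c0 c2 HC Q0 (S + h) s0 (nz _ sS)).
    * set u := expR (- h).
      have u0 : 0 < u := expR_gt0 _.
      have u1 : u < 1 by rewrite /u expR_lt1 oppr_lt0.
      have uh : 1 - h <= u by have := expR_ge1Dx (- h); rewrite /u; lra.
      have qu : expR (- ((S + h) * 1)) * E = u.
        by rewrite qE /u; congr expR; ring.
      have Fv : Fq R (expR (- ((S + h) * 1))) (Wl R n%:R a c) = (E ^+ 2 + 1 - 2 * E * u) / (1 - u ^+ 2).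
        rewrite /Fq Wq -qu; congr (_ / _); ring.
      rewrite Fv.
      have den0 : 0 < 1 - u ^+ 2 by nra.
      have den1 : 1 - u ^+ 2 <= 2 * h by nra.
      have num : (E - 1) ^+ 2 <= E ^+ 2 + 1 - 2 * E * u by nra.
      have hB' : 2 * h * (`|B| + 1) <= (E - 1) ^+ 2.
        by move: hB; rewrite ler_pdivlMr; [lra | lra].
      have key : `|B| + 1 <= (E ^+ 2 + 1 - 2 * E * u) / (1 - u ^+ 2).
        rewrite ler_pdivlMr //; nra.
      have := ler_norm B.
      have := ler_norm ((E ^+ 2 + 1 - 2 * E * u) / (1 - u ^+ 2)).
      lra.
Qed.
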